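(* Let $\bar U_K^*:=\{x\in\mathcal E^K:\ x\cdot v\ge0\ \text{for all } v\in\bar U_K\}$. Then \[ \bar U_K^*=\Big\{x\in\mathcal E^K:\ \sum_{\ell=k}^K x_\ell\ge0\ \text{for all } k\in\{1,\dots,K\}\Big\}, \] and \[ \bar U_K=\{v\in\mathcal E^K:\ x\cdot v\ge0\ \text{for all } x\in\bar U_K^*\}. \]
   Context: Fix integers $D,K\ge1$. Either $\mathcal C=(0,\infty)^D$, $\bar{\mathcal C}=\mathbb{R}_+^D$, $\mathcal E=\mathbb{R}^D$ with the Euclidean inner product, or $\bar{\mathcal C}=S^D_+$ (positive semidefinite symmetric $D\times D$ matrices), $\mathcal E=S^D$ (symmetric matrices) with $a\cdot b=\mathrm{tr}(a^*b)$. For $x,y\in\mathcal E$, $x\le y$ means $y-x\in\bar{\mathcal C}$ (so ''$\ge0$'' means membership in $\bar{\mathcal C}$). $\bar U_K=\{x=(x_1,\dots,x_K)\in\bar{\mathcal C}^K: x_1\le\dots\le x_K\}$, and on $\mathcal E^K$, $x\cdot y=\sum_{k=1}^K x_k\cdot y_k$. *)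

(* Defs.v *)
From HB Require Import structures.
From mathcomp Require Import all_boot all_order all_algebra.
From mathcomp Require Import all_reals.
Set Implicit Arguments. Unset Strict Implicit. Unset Printing Implicit Defensive.
Import Order.TTheory GRing.Theory Num.Theory.
Local Open Scope ring_scope.

(* Generic setting: V is an ambient zmodType containing the space E
   (membership predicate inE), ge0 is membership in the closed cone C-bar,
   dot is the inner product on E. *)

Definition cle (V : zmodType) (ge0 : V -> Prop) (x y : V) : Prop := ge0 (y - x).

Definition dotK (R : pzRingType) (V : Type) (dot : V -> V -> R) (K : nat)
  (x y : 'I_K -> V) : R := \sum_(k < K) dot (x k) (y k).

Definition inEK (V : Type) (inE : V -> Prop) (K : nat) (x : 'I_K -> V) : Prop :=
  forall k, inE (x k).

Definition Ubar (V : zmodType) (ge0 : V -> Prop) (K : nat) (x : 'I_K -> V) : Prop :=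
  (forall k, ge0 (x k)) /\
  (forall (k l : 'I_K), (nat_of_ord l = (nat_of_ord k).+1)%N -> cle ge0 (x k) (x l)).

Definition Ustar (R : numDomainType) (V : zmodType) (inE : V -> Prop)
  (ge0 : V -> Prop) (dot : V -> V -> R) (K : nat) (x : 'I_K -> V) : Prop :=
  inEK inE x /\ (forall v, Ubar ge0 v -> 0 <= dotK dot x v).

Definition lemma3p3_concl (R : numDomainType) (V : zmodType) (inE : V -> Prop)
  (ge0 : V -> Prop) (dot : V -> V -> R) (K : nat) : Prop :=
  (forall x : 'I_K -> V,
     Ustar inE ge0 dot x <->
     (inEK inE x /\ forall k : 'I_K, ge0 (\sum_(l < K | (k <= l)%N) x l))) /\
  (forall v : 'I_K -> V,
     Ubar ge0 v <->
     (inEK inE v /\ forall x, Ustar inE ge0 dot x -> 0 <= dotK dot x v)).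

(* Case 1: E = R^D (row vectors), C-bar = R_+^D, Euclidean inner product. *)
Definition orth_inE (R : realType) (D : nat) (v : 'rV[R]_D) : Prop := True.
Definition orth_ge0 (R : realType) (D : nat) (v : 'rV[R]_D) : Prop :=
  forall i, 0 <= v 0 i.
Definition orth_dot (R : realType) (D : nat) (u v : 'rV[R]_D) : R :=
  \sum_(i < D) u 0 i * v 0 i.

(* Case 2: E = S^D symmetric matrices, C-bar = S^D_+ (PSD), a.b = tr(a^* b). *)
Definition sym_inE (R : realType) (D : nat) (A : 'M[R]_D) : Prop := A^T = A.
Definition psd (R : realType) (D : nat) (A : 'M[R]_D) : Prop :=
  A^T = A /\ forall v : 'cV[R]_D, 0 <= (v^T *m A *m v) 0 0.
Definition sym_dot (R : realType) (D : nat) (A B : 'M[R]_D) : R :=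
  \tr (A^T *m B).

(* Main.v *)
Require Import Defs.
From HB Require Import structures.
From mathcomp Require Import all_boot all_order all_algebra.
From mathcomp Require Import all_reals.
From mathcomp Require Import ring lra.
Set Implicit Arguments. Unset Strict Implicit. Unset Printing Implicit Defensive.
Import Order.TTheory GRing.Theory Num.Theory.
Local Open Scope ring_scope.

Record cone_ax (R : numDomainType) (V : zmodType) (inE ge0 : V -> Prop)
  (dot : V -> V -> R) : Prop := {
  inE0 : inE 0;
  inEB : forall x y, inE x -> inE y -> inE (x - y);
  ge0E : forall x, ge0 x -> inE x;
  dotBl : forall x y z, dot (x - y) z = dot x z - dot y z;
  dotC : forall x y, dot x y = dot y x;
  selfdual : forall x, inE x -> (ge0 x <-> forall c, ge0 c -> 0 <= dot x c) }.

Lemma sum_ifeq (T : zmodType) K (P : pred 'I_K) (l : 'I_K) (c : T) :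
  \sum_(j < K | P j) (if j == l then c else 0) = if P l then c else 0.
Proof.
rewrite big_mkcond (bigD1 l) //= eqxx big1 ?addr0 //.
by move=> j /negbTE ->; case: (P j).
Qed.

Lemma sum_ifeq2 (T : zmodType) K (l : 'I_K) (F : 'I_K -> T) :
  \sum_(j < K) (if j == l then F j else 0) = F l.
Proof.
rewrite (bigD1 l) //= eqxx big1 ?addr0 //.
by move=> j /negbTE ->.
Qed.

Definition prevo K (j : 'I_K) : 'I_K :=
  Ordinal (leq_ltn_trans (leq_pred j) (ltn_ord j)).

Lemma generic (R : numDomainType) (V : zmodType) (inE ge0 : V -> Prop)
  (dot : V -> V -> R) K (H : cone_ax inE ge0 dot) :
  lemma3p3_concl inE ge0 dot K.
Proof.
have dot0l : forall z, dot 0 z = 0.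
  by move=> z; have h := dotBl H 0 0 z; rewrite subr0 in h; rewrite {1}h subrr.
have dotNl : forall y z, dot (- y) z = - dot y z.
  by move=> y z; have h := dotBl H 0 y z; rewrite sub0r dot0l sub0r in h.
have dotDl : forall x y z, dot (x + y) z = dot x z + dot y z.
  by move=> x y z; have h := dotBl H x (- y) z; rewrite opprK in h; rewrite h dotNl opprK.
have dot0r : forall z, dot z 0 = 0 by move=> z; rewrite (dotC H) dot0l.
have dotBr : forall x y z, dot z (x - y) = dot z x - dot z y.
  by move=> x y z; rewrite (dotC H) (dotBl H) !(dotC H z).
have dotDr : forall x y z, dot z (x + y) = dot z x + dot z y.
  by move=> x y z; rewrite (dotC H) dotDl !(dotC H z).
have sumdl : forall z (I : finType) (P : pred I) (F : I -> V),
    dot (\sum_(i | P i) F i) z = \sum_(i | P i) dot (F i) z.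
  by move=> z I P F; apply: (big_morph (fun x => dot x z) (fun a b => dotDl a b z) (dot0l z)).
have sumdr : forall z (I : finType) (P : pred I) (F : I -> V),
    dot z (\sum_(i | P i) F i) = \sum_(i | P i) dot z (F i).
  by move=> z I P F; apply: (big_morph (fun x => dot z x) (fun a b => dotDr a b z) (dot0r z)).
have inEN : forall x, inE x -> inE (- x).
  by move=> x hx; rewrite -sub0r; apply: (inEB H) => //; exact: (inE0 H).
have inED : forall x y, inE x -> inE y -> inE (x + y).
  by move=> x y hx hy; rewrite -[y]opprK; apply: (inEB H) => //; apply: inEN.
have inEsum : forall (I : finType) (P : pred I) (F : I -> V),
    (forall i, inE (F i)) -> inE (\sum_(i | P i) F i).
  move=> I P F hF; apply: (big_ind inE) => //; exact: (inE0 H).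
have ge00 : ge0 0.
  by apply: (proj2 (selfdual H (inE0 H))) => c _; rewrite dot0l.
have part1 : forall x : 'I_K -> V,
     Ustar inE ge0 dot x <->
     (inEK inE x /\ forall k : 'I_K, ge0 (\sum_(l < K | (k <= l)%N) x l)).
  move=> x; split.
  - case=> hx hv; split => // k.
    apply: (proj2 (selfdual H (inEsum _ _ _ hx))) => c hc.
    pose v := fun l : 'I_K => if (k <= l)%N then c else 0.
    have Uv : Ubar ge0 v.
      split => [l|k' l' hl]; first by rewrite /v; case: ifP.
      rewrite /cle /v; case: (leqP k k') => h1.
        by rewrite ifT ?subrr // hl; apply: leqW.
      by case: ifP => _; rewrite ?subr0 ?subrr.
    have := hv v Uv; rewrite /dotK sumdl big_mkcond /=.
    rewrite /v. under eq_bigr => i _ do rewrite (fun_if (dot (x i))) dot0r. by rewrite [X in _ -> 0 <= X]big_mkcond.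
  - case=> hx hS; split => // v [v0 vc].
    pose w := fun j : 'I_K => if val j == 0%N then v j else v j - v (prevo j).
    have w0 : forall j, ge0 (w j).
      move=> j; rewrite /w; case: eqP => hj; first exact: v0. apply: (vc (prevo j) j) => /=.
      by rewrite prednK // lt0n; apply/eqP.
    have tele : forall n (k : 'I_K), nat_of_ord k = n ->
        v k = \sum_(j < K | (j <= k)%N) w j.
      elim=> [|n IH] k hk.
        rewrite (big_pred1 k); first by rewrite /w ifT //; apply/eqP; exact: hk.
        by move=> j /=; rewrite -(inj_eq val_inj) /= hk leqn0.
      rewrite (bigD1 k) //=.
      have hp : nat_of_ord (prevo k) = n by rewrite /= hk.
      rewrite (eq_bigl (fun j : 'I_K => (j <= prevo k)%N)); last first.
        move=> j; rewrite /= hk -(inj_eq val_inj) /= hk.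
        by rewrite andbC -ltn_neqAle ltnS.
      have hk2 : val k = n.+1 := hk. by rewrite -(IH _ hp) /w hk2 /= subrK.
    rewrite /dotK.
    rewrite (eq_bigr (fun k : 'I_K => \sum_(j < K) if (j <= k)%N then dot (x k) (w j) else 0));
      last first.
      by move=> k _; rewrite (tele _ k erefl) sumdr big_mkcond.
    rewrite exchange_big /=; apply: sumr_ge0 => j _.
    rewrite -big_mkcond /= -sumdl.
    exact: (proj1 (selfdual H (inEsum _ _ _ hx)) (hS j) _ (w0 j)).
split => //.
move=> v; split.
  case=> v0 vc; split; first by move=> k; exact: (ge0E H (v0 k)).
  by move=> x [_ h]; apply: h; split.
case=> hv hx; split.
  move=> k; apply: (proj2 (selfdual H (hv k))) => c hc.
  pose x := fun l : 'I_K => if l == k then c else 0.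
  have Ux : Ustar inE ge0 dot x.
    apply/part1; split.
      by move=> l; rewrite /x; case: eqP => _; [exact: (ge0E H hc) | exact: (inE0 H)].
    by move=> k'; rewrite sum_ifeq; case: ifP.
  have := hx x Ux; rewrite /dotK.
  under eq_bigr => i _ do rewrite /x (fun_if (dot ^~ (v i))) dot0l.
  by rewrite sum_ifeq2 (dotC H).
move=> k l hl; rewrite /cle.
apply: (proj2 (selfdual H (inEB H (hv l) (hv k)))) => c hc.
pose x := fun j : 'I_K => (if j == l then c else 0) - (if j == k then c else 0).
have Ux : Ustar inE ge0 dot x.
  apply/part1; split.
    move=> j; rewrite /x; apply: (inEB H); case: eqP => _;
      by [exact: (ge0E H hc) | exact: (inE0 H)].
  move=> k'; rewrite /x sumrB !sum_ifeq hl.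
  case: (leqP k' k) => h1; first by rewrite ifT ?subrr // leqW.
  by case: ifP => _; rewrite ?subr0 ?subrr.
have := hx x Ux; rewrite /dotK.
under eq_bigr => i _ do rewrite /x (dotBl H) (fun_if (dot ^~ (v i))) dot0l
   (fun_if (dot ^~ (v i))) dot0l.
by rewrite sumrB !sum_ifeq2 (dotBl H) !(dotC H c).
Qed.
Lemma eD (R : realType) m n (A B : 'M[R]_(m,n)) i j : (A + B) i j = A i j + B i j.
Proof. by rewrite mxE. Qed.
Lemma eB (R : realType) m n (A B : 'M[R]_(m,n)) i j : (A - B) i j = A i j - B i j.
Proof. by rewrite !mxE. Qed.
Lemma eZ (R : realType) m n (a : R) (A : 'M[R]_(m,n)) i j : (a *: A) i j = a * A i j.
Proof. by rewrite mxE. Qed.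
Lemma eT (R : realType) m n (A : 'M[R]_(m,n)) i j : A^T j i = A i j.
Proof. by rewrite mxE. Qed.
Lemma e11 (R : realType) m (A : 'M[R]_(1,m)) (B : 'M[R]_(m,1)) :
  (A *m B) 0 0 = (B^T *m A^T) 0 0.
Proof. by rewrite -trmx_mul eT. Qed.
Lemma mul11 (R : realType) (a : 'M[R]_(1,1)) (b : 'M[R]_1) : (a *m b) 0 0 = a 0 0 * b 0 0.
Proof. by rewrite mxE big_ord1. Qed.

Definition bil (R : realType) D (B : 'M[R]_D) (u w : 'cV[R]_D) := (u^T *m B *m w) 0 0.

Lemma bilC (R : realType) D (B : 'M[R]_D) u w : B^T = B -> bil B u w = bil B w u.
Proof. by move=> hB; rewrite /bil e11 trmx_mul trmxK hB mulmxA. Qed.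

Lemma quad (R : realType) D (B : 'M[R]_D) u w t : B^T = B ->
  bil B (u + t *: w) (u + t *: w) = bil B u u + 2 * t * bil B u w + t ^+ 2 * bil B w w.
Proof.
move=> hB; have hC := bilC u w hB.
rewrite /bil [(u + t *: w)^T]linearD /= [(t *: w)^T]linearZ /= !mulmxDl !mulmxDr -!scalemxAl -!scalemxAr.
rewrite !eD !eZ; move: hC; rewrite /bil => ->.
by rewrite expr2; ring.
Qed.

Lemma quad_ineq (R : realType) (a b c : R) :
  (forall t, 0 <= a + 2 * t * b + t ^+ 2 * c) -> 0 <= c ->
  (c = 0 -> b = 0) /\ (0 < c -> b ^+ 2 / c <= a).
Proof.
move=> h c0; split.
  move=> hc; case: (eqVneq b 0) => // hb.
  have := h (- (a + 1) / (2 * b)); rewrite hc mulr0 addr0.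
  have -> : 2 * (- (a + 1) / (2 * b)) * b = - (a + 1).
    by field.
  by rewrite opprD addrA subrr add0r oppr_ge0 ler10.
move=> cpos; have := h (- b / c).
have -> : a + 2 * (- b / c) * b + (- b / c) ^+ 2 * c = a - b ^+ 2 / c.
  by field; rewrite gt_eqF.
by rewrite subr_ge0.
Qed.

Lemma bil_delta (R : realType) D (B : 'M[R]_D) i j :
  bil B (delta_mx j 0) (delta_mx i 0) = B j i.
Proof. by rewrite /bil -colE trmx_delta -rowE !mxE. Qed.

Lemma bil_e (R : realType) D (B : 'M[R]_D) u i :
  bil B u (delta_mx i 0) = (u^T *m col i B) 0 0.
Proof. by rewrite /bil colE mulmxA. Qed.

Lemma tr_rank1 (R : realType) D (M : 'M[R]_D) (c : 'cV[R]_D) :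
  \tr (M *m (c *m c^T)) = bil M c c.
Proof.
by rewrite mulmxA mxtrace_mulC /bil mulmxA /mxtrace big_ord1.
Qed.

Lemma bil_rank1 (R : realType) D (c u : 'cV[R]_D) :
  bil (c *m c^T) u u = (u^T *m c) 0 0 ^+ 2.
Proof.
by rewrite /bil mulmxA -(mulmxA (u^T *m c)) mul11 (e11 c^T) trmxK expr2.
Qed.

Lemma zero_diag (R : realType) D (B : 'M[R]_D) i :
  psd B -> B i i = 0 -> forall j, B j i = 0 /\ B i j = 0.
Proof.
case=> hs hp hii j.
have h : forall t, 0 <= B j j + 2 * t * B j i + t ^+ 2 * B i i.
  move=> t; have := hp (delta_mx j 0 + t *: delta_mx i 0).
  by rewrite -/(bil _ _ _) quad // !bil_delta.
have hc : 0 <= B i i by rewrite hii.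
have [h1 _] := quad_ineq h hc.
have e := h1 hii; split => //.
by rewrite -[B i j]eT hs.
Qed.

Lemma diag_ge0 (R : realType) D (B : 'M[R]_D) i : psd B -> 0 <= B i i.
Proof. by case=> _ hp; have := hp (delta_mx i 0); rewrite -/(bil _ _ _) bil_delta. Qed.

Definition schur (R : realType) D (B : 'M[R]_D) i : 'M[R]_D :=
  B - (B i i)^-1 *: (col i B *m (col i B)^T).

Lemma schur_psd (R : realType) D (B : 'M[R]_D) i :
  psd B -> 0 < B i i -> psd (schur B i).
Proof.
move=> [hs hp] hpos; split.
  by rewrite /schur linearB /= linearZ /= trmx_mul trmxK hs.
move=> u; rewrite -/(bil _ _ _).
have h : forall t, 0 <= bil B u u + 2 * t * bil B u (delta_mx i 0) +
    t ^+ 2 * bil B (delta_mx i 0) (delta_mx i 0).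
  by move=> t; rewrite -quad //; apply: hp.
rewrite bil_delta in h.
have [_ h2] := quad_ineq h (ltW hpos).
have := h2 hpos.
have -> : bil (schur B i) u u = bil B u u - (B i i)^-1 * bil (col i B *m (col i B)^T) u u.
  by rewrite /bil /schur mulmxBr mulmxBl eB -scalemxAr -scalemxAl eZ.
by rewrite bil_rank1 -bil_e subr_ge0 mulrC.
Qed.

Lemma schur_diag (R : realType) D (B : 'M[R]_D) i j :
  schur B i j j = B j j - (B i i)^-1 * (B j i * B j i).
Proof. by rewrite /schur eB eZ mxE big_ord1 !mxE. Qed.

Lemma fejer (R : realType) D (A B : 'M[R]_D) :
  psd A -> psd B -> 0 <= \tr (A^T *m B).
Proof.
move=> hA.
suff: forall n (B : 'M[R]_D), psd B -> (#|[set j | B j j != 0%R]| <= n)%N ->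
  0 <= \tr (A^T *m B) by move=> H hB; apply: (H _ B hB (leqnn _)).
have empty : forall B : 'M[R]_D, psd B -> [set j | B j j != 0] = set0 ->
    0 <= \tr (A^T *m B).
  move=> B0 hB0 e; have -> : B0 = 0.
    apply/matrixP => j i; rewrite mxE.
    have : i \notin [set j | B0 j j != 0] by rewrite e inE.
    rewrite inE negbK => /eqP hi.
    by case: (zero_diag hB0 hi j).
  by rewrite mulmx0 linear0.
elim=> [|n IH] B0 hB0 hn.
  by apply: empty => //; apply/eqP; rewrite -cards_eq0 -leqn0.
case: (eqVneq [set j | B0 j j != 0] set0) => [e|/set0Pn [i]]; first exact: empty.
rewrite inE => hi.
have hpos : 0 < B0 i i by rewrite lt_def hi diag_ge0.
have hS := schur_psd hB0 hpos.
have -> : B0 = schur B0 i + (B0 i i)^-1 *: (col i B0 *m (col i B0)^T).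
  by rewrite /schur subrK.
rewrite mulmxDr mxtraceD -scalemxAr mxtraceZ tr_rank1.
apply: addr_ge0; last first.
  apply: mulr_ge0; first by rewrite invr_ge0 ltW.
  by case: hA => hAs hAp; rewrite hAs; apply: hAp.
apply: IH => //.
have sub : [set j | schur B0 i j j != 0] \subset [set j | B0 j j != 0] :\ i.
  apply/subsetP => j; rewrite !inE schur_diag.
  case: (eqVneq j i) => [->|hji] /=.
    by rewrite mulrA mulVf ?mul1r ?subrr ?eqxx // gt_eqF.
  case: (eqVneq (B0 j j) 0) => // hjj.
  by have [_ ->] := zero_diag hB0 hjj i; rewrite mulr0 mulr0 subr0 hjj eqxx.
apply: leq_trans (subset_leq_card sub) _.
move: hn; rewrite (cardsD1 i) inE hi /=.
by rewrite add1n ltnS.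
Qed.

Lemma orth_ax (R : realType) D : cone_ax (@orth_inE R D) (@orth_ge0 R D) (@orth_dot R D).
Proof.
split => //.
- by move=> x y z; rewrite /orth_dot -sumrB; apply: eq_bigr => i _; rewrite eB mulrBl.
- by move=> x y; rewrite /orth_dot; apply: eq_bigr => i _; rewrite mulrC.
- move=> x _; split.
    by move=> hx c hc; apply: sumr_ge0 => i _; apply: mulr_ge0.
  move=> h i; have := h (delta_mx 0 i).
  have -> : orth_dot x (delta_mx 0 i) = x 0 i.
    rewrite /orth_dot (bigD1 i) //= big1 ?addr0; first by rewrite mxE !eqxx mulr1.
    by move=> j hj; rewrite mxE (negbTE hj) andbF mulr0.
  apply => j; rewrite mxE; case: (_ && _) => //.
Qed.

Lemma sym_ax (R : realType) D : cone_ax (@sym_inE R D) (@psd R D) (@sym_dot R D).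
Proof.
split.
- by rewrite /sym_inE trmx0.
- by move=> x y hx hy; rewrite /sym_inE linearB /= hx hy.
- by move=> x [].
- by move=> x y z; rewrite /sym_dot linearB /= mulmxBl linearB.
- by move=> x y; rewrite /sym_dot -mxtrace_tr trmx_mul trmxK.
- move=> x hx; split.
    by move=> hpx c hc; apply: fejer.
  move=> h; split => // v.
  have hc : psd (v *m v^T).
    split; first by rewrite trmx_mul trmxK.
    by move=> u; rewrite -/(bil _ _ _) bil_rank1 sqr_ge0.
  by have := h _ hc; rewrite /sym_dot tr_rank1 hx.
Qed.

Theorem lemma3p3 (R : realType) (D K : nat) (hD : (1 <= D)%N) (hK : (1 <= K)%N) :
  lemma3p3_concl (@orth_inE R D) (@orth_ge0 R D) (@orth_dot R D) K /\
  lemma3p3_concl (@sym_inE R D) (@psd R D) (@sym_dot R D) K.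
Proof.
by split; apply: generic; [apply: orth_ax | apply: sym_ax].
Qed.
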